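(* Let $k$ be an algebraically closed field, $R$ a finitely generated commutative $k$-algebra, $M$ a Noetherian $R$-module, $y=(y_1,\ldots,y_m)$ an $m$-tuple in $R$ and $y'=(y_1,\ldots,y_{m-1})$. Then $\sigma(y',M)=\pi(\sigma(y,M))$, where $\pi:k^m\to k^{m-1}$ is the projection onto the first $m-1$ coordinates.
   Context: For a commutative $k$-algebra $R$, an $R$-module $M$ and an $n$-tuple $y$ in $R$, the Koszul complex $\operatorname{Kos}(y,M)$ is $0\leftarrow M\leftarrow M\otimes_k\wedge^1k^n\leftarrow\cdots\leftarrow M\otimes_k\wedge^nk^n\leftarrow 0$ with differential $\partial(u\otimes e_{i_1}\wedge\cdots\wedge e_{i_p})=\sum_{s=1}^p(-1)^{s+1}y_{i_s}u\otimes e_{i_1}\wedge\cdots\wedge\widehat{e_{i_s}}\wedge\cdots\wedge e_{i_p}$. For $a\in k^n$, $y-a=(y_1-a_1,\ldots,y_n-a_n)$. The Taylor spectrum $\sigma(y,M)$ is the set of $a\in k^n$ such that $\operatorname{Kos}(y-a,M)$ is not exact. *)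

(* Defs.v *)
From HB Require Import structures.
From mathcomp Require Import all_boot all_order all_algebra.
Set Implicit Arguments. Unset Strict Implicit. Unset Printing Implicit Defensive.
Import Order.TTheory GRing.Theory Num.Theory.
Local Open Scope ring_scope.

Definition subalg_closedP (k : fieldType) (R : comAlgType k) (P : R -> Prop) :=
  [/\ P 1, (forall x y, P x -> P y -> P (x + y)),
      (forall x y, P x -> P y -> P (x * y)) &
      (forall (a : k) x, P x -> P (a *: x))].

Definition fg_algebra (k : fieldType) (R : comAlgType k) : Prop :=
  exists gens : seq R,
    forall P : R -> Prop, subalg_closedP P -> (forall g, g \in gens -> P g) ->
      forall x, P x.

Definition submoduleP (R : comNzRingType) (M : lmodType R) (P : M -> Prop) :=
  [/\ P 0, (forall x y, P x -> P y -> P (x + y)) &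
      (forall (r : R) x, P x -> P (r *: x))].

Definition fg_submodule (R : comNzRingType) (M : lmodType R) (P : M -> Prop) :=
  exists s : seq M, forall x, P x <->
    exists r : 'I_(size s) -> R, x = \sum_(i < size s) r i *: s`_i.

Definition noetherian_module (R : comNzRingType) (M : lmodType R) : Prop :=
  forall P : M -> Prop, submoduleP P -> fg_submodule P.

(** A chain of Kos(y,M) in degree p is an element of
    M (x) /\^p k^n, i.e. a family (u_S) of elements of M indexed by the subsets
    S of {0,..,n-1} with #|S| = p (u_S is the coefficient of
    e_{i_1} /\ ... /\ e_{i_p}, i_1 < ... < i_p, S = {i_1,...,i_p}).
    We put all degrees together as functions {set 'I_n} -> M. *)
Definition homog (R : comNzRingType) (M : lmodType R) (n p : nat)
    (c : {ffun {set 'I_n} -> M}) : Prop :=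
  forall S : {set 'I_n}, #|S| != p -> c S = 0.

(* d(u e_{i_1}/\../\e_{i_p}) = sum_s (-1)^(s+1) y_{i_s} u e_{..^i_s..}:
   the coefficient at T of d c collects, for each i \notin T, the term
   coming from S = i |: T, where i sits at position s with
   s - 1 = #{j in T | j < i}. *)
Definition koszul_d (R : comNzRingType) (M : lmodType R) (n : nat)
    (y : 'I_n -> R) (c : {ffun {set 'I_n} -> M}) : {ffun {set 'I_n} -> M} :=
  [ffun T : {set 'I_n} =>
     \sum_(i < n | i \notin T)
        (((-1) ^+ #|[set j in T | (j < i)%N]| * y i) *: c (i |: T))].

(* In degree 0 every
   chain is a cycle, so this includes surjectivity of M <- M (x) k^n; in
   degree n it says d_n is injective. *)
Definition koszul_exact (R : comNzRingType) (M : lmodType R) (n : nat)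
    (y : 'I_n -> R) : Prop :=
  forall (p : nat) (c : {ffun {set 'I_n} -> M}),
    homog p c -> koszul_d y c = 0 ->
    exists d : {ffun {set 'I_n} -> M}, homog p.+1 d /\ koszul_d y d = c.

Definition shift_tuple (k : fieldType) (R : comAlgType k) (n : nat)
    (y : 'I_n -> R) (a : 'I_n -> k) : 'I_n -> R :=
  fun i => y i - (a i)%:A.

Definition taylor_spectrum (k : fieldType) (R : comAlgType k) (M : lmodType R)
    (n : nat) (y : 'I_n -> R) (a : 'I_n -> k) : Prop :=
  ~ koszul_exact M (shift_tuple y a).

Definition proj_first (k : Type) (m : nat) (a : 'I_m.+1 -> k) : 'I_m -> k :=
  fun i => a (widen_ord (leqnSn m) i).

Definition drop_last (T : Type) (m : nat) (y : 'I_m.+1 -> T) : 'I_m -> T :=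
  fun i => y (widen_ord (leqnSn m) i).

(* Main.v *)
Require Import Defs.
From HB Require Import structures.
From mathcomp Require Import all_boot all_order all_algebra.
From mathcomp Require Import ring.
From mathcomp Require Import ring_quotient generic_quotient.
From mathcomp Require boolp classical_sets.
From Stdlib Require Import IndefiniteDescription Classical FunctionalExtensionality.
Set Implicit Arguments. Unset Strict Implicit. Unset Printing Implicit Defensive.
Import Order.TTheory GRing.Theory Num.Theory.
Local Open Scope ring_scope.

Section Koszul.
Variables (R : comNzRingType) (M : lmodType R) (n : nat) (z : 'I_n -> R).

Definition sgn (T : {set 'I_n}) (i : 'I_n) : R :=
  (-1) ^+ #|[set j in T | (j < i)%N]|.

Definition eps (b : bool) : R := if b then -1 else 1.

Lemma sgn_sq (T : {set 'I_n}) (i : 'I_n) : sgn T i * sgn T i = 1.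
Proof. by rewrite /sgn -exprD -signr_odd oddD addbb. Qed.

Lemma sgnU1 (T : {set 'I_n}) (j i : 'I_n) : j \notin T -> sgn (j |: T) i = eps (j < i)%N * sgn T i.
Proof.
move=> jT; rewrite /sgn /eps.
have -> : [set l in j |: T | (l < i)%N] =
   if (j < i)%N then j |: [set l in T | (l < i)%N] else [set l in T | (l < i)%N].
  apply/setP=> l; case: ifP => ji; rewrite !inE;
  case: (l =P j) => [->|] //=; rewrite ?ji //.
  by rewrite (negbTE jT).
case: ltnP => ji; last by rewrite mul1r.
by rewrite cardsU1 inE (negbTE jT) /= exprS.
Qed.

Lemma sgnD1 (T : {set 'I_n}) (i : 'I_n) : sgn (T :\ i) i = sgn T i.
Proof.
rewrite /sgn; congr (_ ^+ _); apply: eq_card => l; rewrite !inE.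
by case: (l =P i) => [->|]; rewrite ?ltnn ?andbF.
Qed.

Lemma eps_neq (i j : 'I_n) : i != j -> eps (j < i)%N * eps (i < j)%N = -1.
Proof.
move=> ij; rewrite /eps; case: (ltngtP j i) => h /=; rewrite ?mulN1r ?mulr1 ?mul1r //.
by move: ij; rewrite -(inj_eq val_inj) /= h eqxx.
Qed.

Definition wedge (i : 'I_n) (c : {ffun {set 'I_n} -> M}) : {ffun {set 'I_n} -> M} :=
  [ffun S : {set 'I_n} => if i \in S then sgn (S :\ i) i *: c (S :\ i) else 0].

Lemma kdE (c : {ffun {set 'I_n} -> M}) (T : {set 'I_n}) :
  koszul_d z c T = \sum_(i < n | i \notin T) ((sgn T i * z i) *: c (i |: T)).
Proof. by rewrite ffunE. Qed.

Lemma setU1D1 (T : {set 'I_n}) (i j : 'I_n) : j != i -> (j |: T) :\ i = j |: (T :\ i).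
Proof.
move=> ji; apply/setP=> l; rewrite !inE; case: (l =P i) => [->|_] /=;
  by rewrite ?(negbTE ji) // eq_sym (negbTE ji).
Qed.

Lemma homotopy (i : 'I_n) (c : {ffun {set 'I_n} -> M}) (T : {set 'I_n}) :
  koszul_d z (wedge i c) T + wedge i (koszul_d z c) T = z i *: c T.
Proof.
rewrite kdE [wedge i _ T]ffunE; case: (boolP (i \in T)) => iT.
  rewrite kdE [X in _ + _ *: X](bigD1 i) /=; last by rewrite !inE eqxx.
  rewrite setD1K // scalerDr addrCA scalerA mulrA sgn_sq mul1r.
  rewrite -[RHS]addr0; congr (_ + _); rewrite scaler_sumr.
  rewrite [X in _ + X](eq_bigl (fun j : 'I_n => j \notin T)); last first.
    move=> j; rewrite !inE; case: (j =P i) => [->|_] /=; rewrite ?iT ?andbF ?andbT //.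
  rewrite -big_split /=.
  apply: big1 => j jT; rewrite ffunE !inE iT orbT.
  have ji : j != i by apply: contraNneq jT => ->.
  rewrite setU1D1 //.
  have jT' : j \notin T :\ i by rewrite !inE negb_and jT orbT.
  rewrite (@sgnU1 (T :\ i) j i jT').
  rewrite -{1}(setD1K iT) (@sgnU1 (T :\ i) i j) ?inE ?eqxx //.
  rewrite !scalerA -scalerDl.
  set a := sgn (T :\ i) i; set b := sgn (T :\ i) j.
  have -> : eps (i < j)%N * b * z j * (eps (j < i)%N * a) =
            (eps (j < i)%N * eps (i < j)%N) * (a * (b * z j)) by ring.
  by rewrite eps_neq 1?eq_sym // mulN1r addNr scale0r.
rewrite addr0 (bigD1 i) //= ffunE setU11 setU1K //.
rewrite scalerA mulrAC sgn_sq mul1r.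
rewrite -[RHS]addr0; congr (_ + _); apply: big1 => j /andP[jT ji].
by rewrite ffunE !inE eq_sym (negbTE ji) (negbTE iT) scaler0.
Qed.
End Koszul.

Section KoszulExact.
Variables (R : comNzRingType) (M : lmodType R) (n : nat) (z : 'I_n -> R).

Lemma kd_lin (a : R) (c1 c2 : {ffun {set 'I_n} -> M}) :
  koszul_d z (a *: c1 + c2) = a *: koszul_d z c1 + koszul_d z c2.
Proof.
apply/ffunP => T; rewrite !ffunE scaler_sumr -big_split /=.
by apply: eq_bigr => i _; rewrite !ffunE scalerDr !scalerA [_ * a]mulrC.
Qed.

Lemma kd0 : koszul_d z 0 = 0 :> {ffun {set 'I_n} -> M}.
Proof. by apply/ffunP => T; rewrite kdE ffunE big1 // => i _; rewrite ffunE scaler0. Qed.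

Lemma kd_sum (I : finType) (f : I -> {ffun {set 'I_n} -> M}) :
  koszul_d z (\sum_i f i) = \sum_i koszul_d z (f i).
Proof.
elim/big_rec2: _ => [|i b1 b2 _ <-].
  by apply/ffunP => T; rewrite kdE ffunE big1 // => j _; rewrite ffunE scaler0.
by rewrite -[X in koszul_d z (X + _)]scale1r kd_lin scale1r.
Qed.

Lemma kdZ (a : R) (c : {ffun {set 'I_n} -> M}) :
  koszul_d z (a *: c) = a *: koszul_d z c.
Proof. by rewrite -[a *: c]addr0 kd_lin kd0 addr0. Qed.

Lemma wedge0 i : wedge i (0 : {ffun {set 'I_n} -> M}) = 0.
Proof. by apply/ffunP => T; rewrite !ffunE; case: ifP; rewrite ?scaler0. Qed.

Lemma kd_wedge i (c : {ffun {set 'I_n} -> M}) :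
  koszul_d z c = 0 -> koszul_d z (wedge i c) = z i *: c.
Proof.
move=> dc; apply/ffunP => T; have := homotopy z i c T.
have z0 : (0 : {ffun {set 'I_n} -> M}) T = 0 by rewrite ffunE.
by rewrite dc wedge0 z0 addr0 => ->; rewrite ffunE.
Qed.

Definition inI (a : R) := exists t : 'I_n -> R, a = \sum_i z i * t i.
Definition zM (x : M) := exists m : 'I_n -> M, x = \sum_i z i *: m i.

Lemma exact_of_ann (r : R) : inI (r - 1) -> (forall x : M, r *: x = 0) ->
  koszul_exact M z.
Proof.
move=> [t ht] ann p c hc dc.
exists (\sum_i (- t i) *: wedge i c); split.
  move=> S hS; rewrite sum_ffunE; apply: big1 => i _; rewrite ffunE ffunE.
  case: ifP => iS; last by rewrite !scaler0.
  rewrite hc ?scaler0 //; apply: contra hS => /eqP h.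
  by rewrite (cardsD1 i S) iS h.
rewrite kd_sum.
under eq_bigr do rewrite kdZ kd_wedge // scalerA.
rewrite -scaler_suml.
have -> : \sum_i - t i * z i = 1 - r.
  by rewrite -opprB ht -sumrN; apply: eq_bigr => i _; rewrite mulrC mulrN.
have rc : r *: c = 0.
  by apply/ffunP => T; rewrite !ffunE ann.
by rewrite scalerBl scale1r rc subr0.
Qed.

Lemma zM_of_exact : koszul_exact M z -> forall x : M, zM x.
Proof.
move=> ex x.
pose c : {ffun {set 'I_n} -> M} := [ffun S => if S == set0 then x else 0].
have hc : homog 0 c.
  by move=> S hS; rewrite ffunE; case: eqP => // S0; move: hS; rewrite S0 cards0.
have dc : koszul_d z c = 0.
  apply/ffunP => T; rewrite kdE ffunE; apply: big1 => i _; rewrite ffunE.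
  case: eqP => [h|]; last by rewrite scaler0.
  by have := setU11 i T; rewrite h inE.
have [d [_ hd]] := ex 0%N c hc dc.
exists (fun i => d (i |: set0)).
have : koszul_d z d set0 = c set0 by rewrite hd.
rewrite kdE ffunE eqxx => <-.
apply: eq_big => [i|i _]; first by rewrite inE.
rewrite /sgn (_ : [set j in set0 | _] = set0) ?cards0 ?expr0 ?mul1r //.
by apply/setP => j; rewrite !inE.
Qed.
End KoszulExact.

Section Nakayama.
Variables (R : comNzRingType) (M : lmodType R) (I : R -> Prop) (L : M -> Prop).
Hypotheses (I0 : I 0) (ID : forall a b, I a -> I b -> I (a + b))
  (IM : forall r a, I a -> I (r * a)).
Hypotheses (L0 : L 0) (LD : forall x y, L x -> L y -> L (x + y))
  (LZ : forall (r : R) x, L x -> L (r *: x)).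

Lemma IN a : I a -> I (- a).
Proof. by move=> h; rewrite -mulN1r; apply: IM. Qed.

Lemma IB a b : I a -> I b -> I (a - b).
Proof. by move=> ha hb; apply: ID => //; apply: IN. Qed.

Lemma LN x : L x -> L (- x).
Proof. by move=> h; rewrite -scaleN1r; apply: LZ. Qed.

Lemma LB x y : L x -> L y -> L (x - y).
Proof. by move=> ha hb; apply: LD => //; apply: LN. Qed.

Lemma Lsum (J : finType) (f : J -> M) : (forall j, L (f j)) -> L (\sum_j f j).
Proof. by move=> h; elim/big_rec: _ => // j x _; apply: LD. Qed.

Lemma rearr (V : zmodType) (X Y Z W : V) : X - (W + Y) + (W - Z) = X - (Y + Z).
Proof. by rewrite [W + Y]addrC opprD addrA addrA addrNK opprD addrA. Qed.

Lemma nak_list (vs : seq M) : forall (r : R) (A : nat -> nat -> R),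
  I (r - 1) -> (forall j l, I (A j l)) ->
  (forall j, (j < size vs)%N ->
     L (r *: vs`_j - \sum_(l < size vs) A j l *: vs`_l)) ->
  exists r', I (r' - 1) /\ forall j, (j < size vs)%N -> L (r' *: vs`_j).
Proof.
elim: vs => [|x vs IH] r A hr hA hL.
  by exists 1; split => //; rewrite subrr.
pose u := r - A 0%N 0%N.
pose S0 := \sum_(l < size vs) A 0%N l.+1 *: vs`_l.
have h0 : L (u *: x - S0).
  have := hL 0%N isT; rewrite /= big_ord_recl /= /u /S0 scalerBl.
  by rewrite opprD addrA.
pose A2 j l := u * A j.+1 l.+1 + A j.+1 0%N * A 0%N l.+1.
have hu : I (u - 1) by rewrite /u addrAC; apply: IB.
have [r' [hr' hL']] : exists r', I (r' - 1) /\
    forall j, (j < size vs)%N -> L (r' *: vs`_j).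
  apply: (IH (u * r) A2).
  - have -> : u * r - 1 = (u - 1) * r + (r - 1) by ring.
    by apply: ID => //; rewrite mulrC; apply: IM.
  - by move=> j l; apply: ID; apply: IM.
  - move=> j hj.
    have := hL j.+1 hj; rewrite /= big_ord_recl /= => hj1.
    have := LD (LZ u hj1) (LZ (A j.+1 0%N) h0).
    congr L.
    have eA : forall l, A2 j l *: vs`_l =
        u *: (A j.+1 l.+1 *: vs`_l) + A j.+1 0%N *: (A 0%N l.+1 *: vs`_l).
      by move=> l; rewrite /A2 scalerDl !scalerA.
    rewrite (eq_bigr _ (fun (l : 'I_(size vs)) _ => eA l)).
    rewrite big_split /= -!scaler_sumr -/S0.
    rewrite scalerBr scalerDr scalerBr !scalerA [A j.+1 0%N * u]mulrC -scalerA.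
    exact: rearr.
exists (r' * u); split.
  have -> : r' * u - 1 = (r' - 1) * u + (u - 1) by ring.
  by apply: ID; [rewrite mulrC; apply: IM | ].
case => [|j] hj /=.
  have -> : (r' * u) *: x = r' *: (u *: x - S0) + \sum_(l < size vs) A 0%N l.+1 *: (r' *: vs`_l).
    have e : r' *: S0 = \sum_(l < size vs) A 0%N l.+1 *: (r' *: vs`_l).
      by rewrite /S0 scaler_sumr; apply: eq_bigr => l _; rewrite !scalerA mulrC.
    by rewrite scalerBr e subrK scalerA.
  by apply: LD; [apply: LZ | apply: Lsum => l; apply: LZ; apply: hL'].
by rewrite mulrC -scalerA; apply: LZ; apply: hL'.
Qed.
End Nakayama.

Lemma choice_fun (A B : Type) (P : A -> B -> Prop) :
  (forall a, exists b, P a b) -> exists f, forall a, P a (f a).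
Proof.
move=> h; exists (fun a => proj1_sig (constructive_indefinite_description _ (h a))).
by move=> a; case: (constructive_indefinite_description _ (h a)).
Qed.

Section Nakayama2.
Variables (R : comNzRingType) (M : lmodType R) (I : R -> Prop) (L : M -> Prop).
Hypotheses (I0 : I 0) (ID : forall a b, I a -> I b -> I (a + b))
  (IM : forall r a, I a -> I (r * a)).
Hypotheses (L0 : L 0) (LD : forall x y, L x -> L y -> L (x + y))
  (LZ : forall (r : R) x, L x -> L (r *: x)).

Lemma Isum (J : finType) (f : J -> R) : (forall j, I (f j)) -> I (\sum_j f j).
Proof. by move=> h; elim/big_rec: _ => // j x _; apply: ID. Qed.

Lemma nakayama (s : seq M) :
  (forall x : M, exists a : 'I_(size s) -> R, x = \sum_i a i *: s`_i) ->
  (forall x : M, exists N (a : 'I_N -> R) (m : 'I_N -> M),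
      (forall i, I (a i)) /\ L (x - \sum_i a i *: m i)) ->
  exists r, I (r - 1) /\ forall x, L (r *: x).
Proof.
move=> gen hx.
have hj : forall j : nat, exists c : nat -> R, (forall l, I (c l)) /\
    L (1 *: s`_j - \sum_(l < size s) c l *: s`_l).
  move=> j; have [N [a [m [ha hL]]]] := hx s`_j.
  have [b hb] := choice_fun (fun i => gen (m i)).
  exists (fun l => if insub l is Some o then \sum_i a i * b i o else 0).
  split.
    by move=> l; case: insub => [o|] //; apply: Isum => i; rewrite mulrC; apply: IM.
  rewrite scale1r; suff -> : \sum_(l < size s)
      (if insub (val l) is Some o then \sum_i a i * b i o else 0) *: s`_l =
      \sum_i a i *: m i by [].
  under eq_bigr => l _ do rewrite valK.
  under eq_bigr => l _ do rewrite scaler_suml.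
  rewrite exchange_big /=; apply: eq_bigr => i _.
  by rewrite hb scaler_sumr; apply: eq_bigr => l _; rewrite scalerA.
have [A hA] := choice_fun hj.
have h1 : I (1 - 1) by rewrite subrr.
have [r [hr hL]] := nak_list I0 ID IM L0 LD LZ h1 (fun j l => (hA j).1 l) (fun j _ => (hA j).2).
exists r; split => // x; have [a ->] := gen x.
rewrite scaler_sumr; apply: Lsum => // i; rewrite scalerA mulrC -scalerA.
by apply: LZ; apply: hL.
Qed.
End Nakayama2.

Section Glue.
Variables (R : comNzRingType) (M : lmodType R).

Lemma inI_z n (z : 'I_n -> R) i : inI z (z i).
Proof.
exists (fun j => (j == i)%:R); rewrite (bigD1 i) //= eqxx mulr1 big1 ?addr0 //.
by move=> j /negbTE ->; rewrite mulr0.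
Qed.

Lemma char_exact n (z : 'I_n -> R) (s : seq M) :
  (forall x : M, exists a : 'I_(size s) -> R, x = \sum_i a i *: s`_i) ->
  (forall x : M, zM z x) -> koszul_exact M z.
Proof.
move=> gen hz.
have I0 : inI z 0 by exists (fun _ => 0); rewrite big1 // => i _; rewrite mulr0.
have ID : forall a b, inI z a -> inI z b -> inI z (a + b).
  move=> a b [ta ->] [tb ->]; exists (fun i => ta i + tb i).
  by rewrite -big_split; apply: eq_bigr => i _; rewrite mulrDr.
have IM : forall r a, inI z a -> inI z (r * a).
  move=> r a [ta ->]; exists (fun i => r * ta i).
  by rewrite mulr_sumr; apply: eq_bigr => i _; rewrite mulrCA.
have L0 : (0 : M) = 0 by [].
have LD : forall x y : M, x = 0 -> y = 0 -> x + y = 0 by move=> x y -> ->; rewrite addr0.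
have LZ : forall (r : R) (x : M), x = 0 -> r *: x = 0 by move=> r x ->; rewrite scaler0.
have hx : forall x : M, exists N (a : 'I_N -> R) (m : 'I_N -> M),
      (forall i, inI z (a i)) /\ x - \sum_i a i *: m i = 0.
  move=> x; have [m hm] := hz x.
  exists n, z, m; split; first by move=> i; apply: inI_z.
  by rewrite hm subrr.
have [r [hr hL]] := @nakayama R M (inI z) (fun x => x = 0) I0 ID IM L0 LD LZ s gen hx.
exact: exact_of_ann hr hL.
Qed.
End Glue.

Lemma max_ideal (R : comNzRingType) (J : R -> Prop) :
  J 0 -> (forall a b, J a -> J b -> J (a + b)) -> (forall r a, J a -> J (r * a)) -> ~ J 1 ->
  exists A : R -> Prop, [/\ A 0, (forall a b, A a -> A b -> A (a + b)),
     (forall r a, A a -> A (r * a)), ~ A 1 & (forall x, J x -> A x) /\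
     (forall x, ~ A x -> exists y, A (x * y - 1))].
Proof.
move=> J0 JD JM J1.
pose isI (A : R -> Prop) := [/\ A 0, (forall a b, A a -> A b -> A (a + b)),
     (forall r a, A a -> A (r * a)), ~ A 1 & (forall x, J x -> A x)].
pose P := fun A : R -> Prop => (forall x, ~ A x) \/ isI A.
have PI : forall A, P A -> forall x, A x -> isI A.
  by move=> A [h|//] x /h.
have [A [PA Amax]] : exists A, P A /\ forall B, classical_sets.proper A B -> ~ P B.
  apply: classical_sets.Zorn_bigcup => F FP tot.
  case: (classic (exists A x, F A /\ A x)) => [[A0 [x0 [FA0 A0x]]]|hno]; last first.
    left => x [X FX Xx]; apply: hno; by exists X, x.
  have I0 := PI _ (FP _ FA0) _ A0x.
  right; split.
  - by exists A0 => //; case: I0.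
  - move=> a b [A1 FA1 A1a] [A2 FA2 A2b].
    case: (tot _ _ FA1 FA2) => sub.
      exists A2 => //; have [_ hD _ _ _] := PI _ (FP _ FA2) _ A2b; apply: hD => //; exact: sub.
    exists A1 => //; have [_ hD _ _ _] := PI _ (FP _ FA1) _ A1a; apply: hD => //; exact: sub.
  - move=> r a [A1 FA1 A1a]; exists A1 => //.
    by have [_ _ hM _ _] := PI _ (FP _ FA1) _ A1a; apply: hM.
  - move=> [A1 FA1 A11]; by have [_ _ _ h _] := PI _ (FP _ FA1) _ A11.
  - by move=> x Jx; exists A0 => //; case: I0 => _ _ _ _; apply.
have IA : isI A.
  case: PA => // hA; exfalso; apply: (Amax J); last by right.
  split; first by move=> x /hA.
  by move=> h; apply: (hA 0); apply: h.
case: IA => A0 AD AM A1 JA.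
exists A; split => //; split => // x Ax.
pose B := fun z => exists a r, A a /\ z = a + x * r.
have PB : ~ P B.
  apply: Amax; split.
    by move=> z Az; exists z, 0; rewrite mulr0 addr0.
  move=> h; apply: Ax; apply: h; exists 0, 1; split => //.
  by rewrite add0r mulr1.
have [y hy] : exists y, A (x * y - 1).
  apply: NNPP => hn; apply: PB; right; split.
  - by exists 0, 0; rewrite mulr0 addr0.
  - move=> u v [a [r [Aa ->]]] [b [s [Ab ->]]]; exists (a + b), (r + s).
    by split; [apply: AD | ring].
  - move=> t u [a [r [Aa ->]]]; exists (t * a), (t * r).
    by split; [apply: AM | ring].
  - move=> [a [r [Aa e]]]; apply: hn; exists r.
    have -> : x * r - 1 = (- 1) * a by rewrite [X in _ - X = _]e; ring.
    exact: AM.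
  - by move=> z Jz; exists z, 0; rewrite mulr0 addr0; split => //; apply: JA.
by exists y.
Qed.

Section Zariski.
Variable K : fieldType.

Definition ralg (A : nzRingType) (phi : A -> K) (gs : seq K) (x : K) : Prop :=
  forall P : K -> Prop, (forall a, P (phi a)) -> (forall g, g \in gs -> P g) ->
    (forall u v, P u -> P v -> P (u + v)) ->
    (forall u v, P u -> P v -> P (u * v)) -> P x.

Definition algA (A : idomainType) (phi : {rmorphism A -> K}) (x : K) : Prop :=
  exists2 a : A, a != 0 & integralOver phi (phi a * x).

Lemma root_algA (A : idomainType) (phi : {rmorphism A -> K}) (p : {poly A}) x :
  injective phi -> p != 0 -> root (map_poly phi p) x -> algA phi x.
Proof.
move=> inj pn0 rx; set a := lead_coef p.
have an0 : a != 0 by rewrite lead_coef_eq0.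
have pha : phi a != 0 by rewrite -(rmorph0 phi) (inj_eq inj).
have sz : size (map_poly phi p) = size p by rewrite size_map_poly_id0.
set d := (size p).-1.
have spd : size p = d.+1 by rewrite /d prednK // size_poly_gt0.
case: d spd => [|d] spd.
  exfalso; move: rx; rewrite /root horner_coef sz spd big_ord1 expr0 mulr1 coef_map.
  have -> : p`_0 = a by rewrite /a lead_coefE spd.
  by rewrite (negbTE pha).
exists a => //.
set Q := \poly_(i < d.+2) (if i == d.+1 then 1 else p`_i * a ^+ (d - i)).
have mQ : Q \is monic by apply/monicP; rewrite lead_coef_poly //= eqxx ?oner_neq0.
exists Q => //.
rewrite /root (horner_coef_wide (n := d.+2)); last first.
  rewrite size_map_poly_id0; first exact: size_poly.
  by rewrite (monicP mQ) rmorph1 oner_neq0.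
rewrite big_ord_recr /= coef_map coef_poly ltnSn eqxx.
rewrite [X in X * _ ^+ d.+1](_ : _ = 1); last exact: rmorph1.
rewrite mul1r.
under eq_bigr => i _ do rewrite coef_map coef_poly ltnS (ltnW (ltn_ord i)) (ltn_eqF (ltn_ord i)).
move: rx; rewrite /root horner_coef sz spd big_ord_recr /= coef_map.
rewrite -/a.
have e : \sum_(i < d.+1) phi (p`_i * a ^+ (d - i)) * (phi a * x) ^+ i =
    phi a ^+ d * \sum_(i < d.+1) phi p`_i * x ^+ i.
  rewrite mulr_sumr; apply: eq_bigr => i _.
  rewrite rmorphM rmorphXn exprMn.
  rewrite [phi a ^+ d](_ : _ = phi a ^+ (d - i) * phi a ^+ i); last first.
    by rewrite -exprD subnK // -ltnS.
  ring.
have pa : p`_d.+1 = a by rewrite /a lead_coefE spd.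
rewrite e pa => /eqP h.
have -> : (phi a * x) ^+ d.+1 = phi a ^+ d * (phi a * x ^+ d.+1) by rewrite exprMn exprS; ring.
rewrite -mulrDr; move: h; under eq_bigr do rewrite coef_map.
by move=> ->; rewrite mulr0.
Qed.
End Zariski.

Section Zariski2.
Variable K : fieldType.

Lemma ralgD (A : nzRingType) (phi : A -> K) gs u v :
  ralg phi gs u -> ralg phi gs v -> ralg phi gs (u + v).
Proof.
move=> hu hv P h1 h2 h3 h4.
by apply: (h3); [exact: (hu P h1 h2 h3 h4) | exact: (hv P h1 h2 h3 h4)].
Qed.

Lemma ralgM (A : nzRingType) (phi : A -> K) gs u v :
  ralg phi gs u -> ralg phi gs v -> ralg phi gs (u * v).
Proof.
move=> hu hv P h1 h2 h3 h4.
by apply: (h4); [exact: (hu P h1 h2 h3 h4) | exact: (hv P h1 h2 h3 h4)].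
Qed.

Section AlgA.
Variables (A : idomainType) (phi : {rmorphism A -> K}).

Lemma algA_phi a : algA phi (phi a).
Proof.
exists 1; first exact: oner_neq0.
rewrite rmorph1 mul1r.
exact: integral_id.
Qed.

Lemma algA_add u v : algA phi u -> algA phi v -> algA phi (u + v).
Proof.
move=> [a an0 ha] [b bn0 hb]; exists (a * b); first exact: mulf_neq0.
have -> : phi (a * b) * (u + v) = phi b * (phi a * u) + phi a * (phi b * v).
  by rewrite rmorphM; ring.
by apply: integral_add; apply: integral_mul => //; apply: integral_id.
Qed.

Lemma algA_mul u v : algA phi u -> algA phi v -> algA phi (u * v).
Proof.
move=> [a an0 ha] [b bn0 hb]; exists (a * b); first exact: mulf_neq0.
have -> : phi (a * b) * (u * v) = (phi a * u) * (phi b * v).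
  by rewrite rmorphM; ring.
exact: integral_mul.
Qed.

Lemma transc g : injective phi -> ~ algA phi g ->
  forall p, p != 0 -> (map_poly phi p).[g] != 0.
Proof.
move=> inj ng p pn0; apply/negP => /eqP h; apply: ng.
by apply: (root_algA inj pn0); apply/eqP.
Qed.
End AlgA.

Lemma one_minus_pow (S : comNzRingType) (q : S) m : exists s, (1 - q) ^+ m = 1 + q * s.
Proof.
elim: m => [|m [s hs]]; first by exists 0; rewrite expr0 mulr0 addr0.
by exists (s - 1 - q * s); rewrite exprS hs; ring.
Qed.

Lemma size_q (A : idomainType) (H : {poly A}) : H != 0 -> size (1 + 'X * H) = (size H).+1.
Proof.
move=> Hn0; rewrite addrC size_polyDl; first by rewrite mulrC size_mulX.
by rewrite mulrC size_mulX // size_poly1 ltnS size_poly_gt0.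
Qed.

Lemma no_unit_q (A : idomainType) (H V : {poly A}) : H != 0 -> (1 + 'X * H) * V != 1.
Proof.
move=> Hn0; apply/eqP => h; have sq := size_q Hn0.
have := size_mul_eq1 (1 + 'X * H) V; rewrite h size_poly1 eqxx sq eqSS.
by rewrite size_poly_eq0 (negbTE Hn0).
Qed.

Lemma key_contra (A : idomainType) (psi : {rmorphism {poly A} -> K}) (H : {poly A}) :
  injective psi -> H != 0 ->
  (forall x, exists N, integralOver psi (psi H ^+ N * x)) -> False.
Proof.
move=> inj Hn0 hall.
set q := 1 + 'X * H.
have qn0 : q != 0 by rewrite -size_poly_eq0 size_q.
have pqn0 : psi q != 0 by rewrite -(rmorph0 psi) (inj_eq inj).
have [N [P mP rP]] := hall (psi q)^-1.
set h := H ^+ N.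
set w := psi H ^+ N * (psi q)^-1 in rP.
have szP : size (map_poly psi P) = size P.
  by rewrite size_map_poly_id0 // (monicP mP) rmorph1 oner_neq0.
set D := (size P).-1.
have sPD : size P = D.+1 by rewrite /D prednK // size_poly_gt0 monic_neq0.
have e1 : \sum_(i < D.+1) psi (P`_i * h ^+ i * q ^+ (D - i)) = 0.
  move: rP; rewrite /root horner_coef szP sPD => /eqP h0.
  have e : psi q ^+ D * (\sum_(i < D.+1) (map_poly psi P)`_i * w ^+ i) = 0.
    by rewrite h0 mulr0.
  rewrite -[X in _ = X]e mulr_sumr; apply: eq_bigr => i _.
  rewrite coef_map !rmorphM !rmorphXn /w exprMn exprVn.
  rewrite (exprB (ltnSE (ltn_ord i))) ?unitfE ?expf_neq0 //.
  by ring.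
have e2 : \sum_(i < D.+1) P`_i * h ^+ i * q ^+ (D - i) = 0.
  by apply: inj; rewrite rmorph_sum e1 rmorph0.
move: e2; rewrite big_ord_recr /= subnn expr0 mulr1.
have -> : P`_D = 1 by rewrite -(monicP mP) lead_coefE sPD.
rewrite mul1r.
have -> : \sum_(i < D) P`_i * h ^+ i * q ^+ (D - i) =
          q * \sum_(i < D) P`_i * h ^+ i * q ^+ (D - i.+1).
  rewrite mulr_sumr; apply: eq_bigr => i _.
  by rewrite -(subnSK (ltn_ord i)) exprS; ring.
set T := \sum_(i < D) _ => eT.
have [s hs] := one_minus_pow q (N * D).
have : (1 - q) ^+ (N * D) = - ((- 'X) ^+ (N * D) * T) * q.
  have -> : 1 - q = (- 'X) * H by rewrite /q; ring.
  rewrite exprMn [H ^+ (N * D)]exprM -/h.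
  have -> : h ^+ D = - (q * T) by apply/eqP; rewrite -addr_eq0 addrC eT.
  ring.
rewrite hs => e3.
have := no_unit_q (- ((- 'X) ^+ (N * D) * T) - s) Hn0.
rewrite -/q.
have -> : q * (- ((- 'X) ^+ (N * D) * T) - s) = 1.
  by apply/eqP; rewrite mulrBr [q * (- _)]mulrC -e3; apply/eqP; ring.
by rewrite eqxx.
Qed.
End Zariski2.

Section Zariski3.
Variable K : fieldType.

Lemma zariski n : forall (A : idomainType) (phi : {rmorphism A -> K}), injective phi ->
  forall gs : seq K, size gs = n -> (forall x, ralg phi gs x) -> forall x, algA phi x.
Proof.
elim: n => [|n IH] A phi inj gs sz hgen x.
  apply: (hgen x (algA phi)).
  - exact: algA_phi.
  - by move=> g; rewrite (size0nil sz).
  - exact: algA_add.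
  - exact: algA_mul.
case: (classic (exists g, g \in gs /\ ~ algA phi g)) => [[g [gin ng]]|hall]; last first.
  apply: (hgen x (algA phi)).
  - exact: algA_phi.
  - by move=> g gin; apply: NNPP => ng; apply: hall; exists g.
  - exact: algA_add.
  - exact: algA_mul.
exfalso.
have cfu : commr_rmorph phi g by move=> a; rewrite /GRing.comm mulrC.
have psiE : forall p, (horner_morph cfu) p = (map_poly phi p).[g] by [].
have injpsi : injective (horner_morph cfu).
  move=> p1 p2 e; apply/eqP; rewrite -subr_eq0; apply: contraT => hn.
  by have := transc inj ng hn; rewrite -psiE rmorphB /= e subrr eqxx.
have psiC : forall a, phi a = (horner_morph cfu) a%:P by move=> a; rewrite horner_morphC.
have psiX : g = (horner_morph cfu) 'X by rewrite horner_morphX.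
set gs' := rem g gs.
have sz' : size gs' = n by rewrite size_rem // sz.
have memgs : forall h, h \in gs -> h = g \/ h \in gs'.
  move=> h hin; case: (h =P g) => [->|hg]; first by left.
  right; move: hin; rewrite (perm_mem (perm_to_rem gin)) inE.
  by case/orP => // /eqP.
have hgen' : forall y, ralg (horner_morph cfu) gs' y.
  move=> y; apply: (hgen y (ralg (horner_morph cfu) gs')).
  - by move=> a; rewrite psiC => P h1 _ _ _; apply: h1.
  - move=> h /memgs [->|hin].
      by move=> P h1 _ _ _; rewrite psiX; apply: h1.
    by move=> P _ h2 _ _; apply: h2.
  - by move=> u v; apply: ralgD.
  - by move=> u v; apply: ralgM.
have halg := IH _ (horner_morph cfu) injpsi gs' sz' hgen'.
have [c hc] : exists c : K -> {poly A}, forall y, c y != 0 /\ integralOver (horner_morph cfu) ((horner_morph cfu) (c y) * y).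
  have hy : forall y, exists c : {poly A}, c != 0 /\ integralOver (horner_morph cfu) ((horner_morph cfu) c * y).
    by move=> y; have [a an0 ha] := halg y; exists a.
  exact: choice_fun hy.
set H := \prod_(h <- gs') c h.
have Hn0 : H != 0.
  by rewrite prodf_seq_neq0; apply/allP => h _; exact: (hc h).1.
apply: (key_contra injpsi Hn0) => y.
apply: (hgen y (fun y => exists N, integralOver (horner_morph cfu) ((horner_morph cfu) H ^+ N * y))).
- move=> a; exists 0%N; rewrite expr0 mul1r psiC; exact: integral_id.
- move=> h /memgs [->|hin].
    by exists 0%N; rewrite expr0 mul1r [X in integralOver _ X]psiX; exact: integral_id.
  exists 1%N; rewrite expr1 /H (big_rem _ hin) /= rmorphM mulrC mulrA mulrC.
  by rewrite [h * _]mulrC; apply: integral_mul; [exact: integral_id | exact: (hc h).2].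
- move=> u v [N1 h1] [N2 h2]; exists (N1 + N2)%N.
  have -> : (horner_morph cfu) H ^+ (N1 + N2) * (u + v) =
     (horner_morph cfu) H ^+ N2 * ((horner_morph cfu) H ^+ N1 * u) + (horner_morph cfu) H ^+ N1 * ((horner_morph cfu) H ^+ N2 * v).
    by rewrite exprD; ring.
  by apply: integral_add; apply: integral_mul => //; rewrite -rmorphXn; exact: integral_id.
- move=> u v [N1 h1] [N2 h2]; exists (N1 + N2)%N.
  have -> : (horner_morph cfu) H ^+ (N1 + N2) * (u * v) = ((horner_morph cfu) H ^+ N1 * u) * ((horner_morph cfu) H ^+ N2 * v).
    by rewrite exprD; ring.
  exact: integral_mul.
Qed.
End Zariski3.

Lemma algA_closed (k : closedFieldType) (K : fieldType) (phi : {rmorphism k -> K}) x :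
  algA phi x -> exists c, x = phi c.
Proof.
move=> [a an0 [p mp rp]].
have [r hr] := closed_field_poly_normal p.
move: rp; rewrite hr (monicP mp) scale1r rmorph_prod /root horner_prod prodf_seq_eq0.
case/hasP => z _ /=; rewrite rmorphB /= map_polyX map_polyC hornerXsubC subr_eq0 => /eqP e.
exists (a^-1 * z); rewrite rmorphM fmorphV -e mulrA mulVf ?mul1r //.
by rewrite fmorph_eq0.
Qed.

Section QuotField.
Local Open Scope quotient_scope.
Variables (k : closedFieldType) (R : comAlgType k) (A : R -> Prop).
Hypotheses (A0 : A 0) (AD : forall a b, A a -> A b -> A (a + b))
  (AM : forall r a, A a -> A (r * a)) (A1 : ~ A 1)
  (Amax : forall x, ~ A x -> exists y, A (x * y - 1)).

Definition Sp : {pred R} := fun x => boolp.asbool (A x).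
Lemma Sp_ideal : idealr_closed Sp.
Proof.
split; rewrite /Sp ?inE.
- by apply/boolp.asboolP.
- by apply/negP => /boolp.asboolP.
- move=> a u v /boolp.asboolP hu /boolp.asboolP hv; apply/boolp.asboolP; exact: AD (AM _ hu) hv.
Qed.
HB.instance Definition _ := isIdealr.Build R Sp Sp_ideal.
Local Notation Kq := {ideal_quot Sp}.

Lemma piE2 (x y : R) : (\pi_Kq x == \pi_Kq y) = boolp.asbool (A (x - y)).
Proof. by rewrite -(Quotient.idealrBE (Sp : idealr R)). Qed.

Lemma pi_eq0 (x : R) : (\pi_Kq x == 0) = boolp.asbool (A x).
Proof. by rewrite -(rmorph0 (\pi_Kq : {rmorphism R -> Kq})) piE2 subr0. Qed.

Definition invR (x : R) : R :=
  if boolp.pselect (exists y, A (x * y - 1)) is left h then sval (boolp.cid h) else 0.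

Definition invq (q : Kq) : Kq := \pi_Kq (invR (repr q)).

Lemma mulVq (q : Kq) : q != 0 -> invq q * q = 1.
Proof.
move=> qn0; rewrite /invq /invR.
have nA : ~ A (repr q).
  by move=> h; move: qn0; rewrite -[q]reprK pi_eq0; move/negP; apply; apply/boolp.asboolP.
case: boolp.pselect => [h|h]; last by exfalso; apply: h; apply: Amax.
case: (boolp.cid h) => y hy /=.
rewrite -[X in _ * X = _]reprK -rmorphM -(rmorph1 (\pi_Kq : {rmorphism R -> Kq})); apply/eqP.
by rewrite piE2 mulrC; apply/boolp.asboolP.
Qed.

Lemma invq0 : invq 0 = 0.
Proof.
rewrite /invq /invR; case: boolp.pselect => [[y hy]|_]; last by rewrite rmorph0.
have : A (repr (0 : Kq)).
  by apply/boolp.asboolP; rewrite -pi_eq0 reprK.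
move=> h; exfalso; apply: A1.
have -> : (1 : R) = (- 1) * (repr (0 : Kq) * y - 1) + y * repr (0 : Kq) by ring.
by apply: AD; apply: AM => //.
Qed.

HB.instance Definition _ := GRing.ComNzRing_isField.Build Kq mulVq invq0.

Lemma point (gens : seq R) :
  (forall P : R -> Prop, subalg_closedP P -> (forall g, g \in gens -> P g) -> forall x, P x) ->
  forall y, exists c : k, A (y - c%:A).
Proof.
move=> hg y.
pose phi : {rmorphism k -> Kq} := (\pi_Kq \o in_alg R).
have inj : injective phi := fmorph_inj phi.
set gs := map \pi_Kq gens.
have hgen : forall x : Kq, ralg phi gs x.
  move=> x; rewrite -[x]reprK.
  apply: (hg (fun r => ralg phi gs (\pi_Kq r))) => //.
  - split.
    + move=> P h1 _ _ _; have -> : (1 : R) = in_alg R 1 by rewrite rmorph1.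
      exact: (h1 1).
    + by move=> u v hu hv; rewrite rmorphD; apply: ralgD.
    + by move=> u v hu hv; rewrite rmorphM; apply: ralgM.
    + move=> a u hu; rewrite -mulr_algl rmorphM; apply: ralgM => //.
      by move=> P h1 _ _ _; apply: (h1 a).
  - by move=> g gin P _ h2 _ _; apply: h2; apply: map_f.
have := zariski inj (erefl (size gs)) hgen (\pi_Kq y).
move/algA_closed => [c hc]; exists c.
by apply/boolp.asboolP; rewrite -piE2 hc.
Qed.
End QuotField.

Lemma nullst (k : closedFieldType) (R : comAlgType k) (J : R -> Prop) (y : R) :
  fg_algebra R -> J 0 -> (forall a b, J a -> J b -> J (a + b)) ->
  (forall r a, J a -> J (r * a)) -> ~ J 1 ->
  exists c : k, forall t, ~ J (1 + (y - c%:A) * t).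
Proof.
move=> [gens hg] J0 JD JM J1.
have [A [A0 AD AM A1 [JA Amax]]] := max_ideal J0 JD JM J1.
have [c hc] := point A0 AD AM A1 Amax hg y.
exists c => t /JA h; apply: A1.
have -> : (1 : R) = (1 + (y - c%:A) * t) + (- t) * (y - c%:A) by ring.
by apply: AD => //; apply: AM.
Qed.

Lemma unlift_widen m (i : 'I_m) : unlift ord_max (widen_ord (leqnSn m) i) = Some i.
Proof.
have -> : widen_ord (leqnSn m) i = lift ord_max i by apply: ord_inj; rewrite lift_max.
exact: liftK.
Qed.

Definition ext_last (T : Type) m (b : 'I_m -> T) (c : T) : 'I_m.+1 -> T :=
  fun j => if unlift ord_max j is Some i then b i else c.

Lemma ext_last_widen (T : Type) m (b : 'I_m -> T) c i :
  ext_last b c (widen_ord (leqnSn m) i) = b i.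
Proof. by rewrite /ext_last unlift_widen. Qed.

Lemma ext_last_max (T : Type) m (b : 'I_m -> T) c : ext_last b c ord_max = c.
Proof. by rewrite /ext_last unlift_none. Qed.

Unset Implicit Arguments.
Set Strict Implicit.

(* The paper's m is m.+1 here (m >= 1 is implicit since y' has m-1 entries). *)
Theorem theorem2p11 (k : closedFieldType) (R : comAlgType k) (M : lmodType R)
    (m : nat) (y : 'I_m.+1 -> R) :
  fg_algebra R -> noetherian_module M ->
  forall b : 'I_m -> k,
    taylor_spectrum M (drop_last y) b <->
    exists a : 'I_m.+1 -> k, taylor_spectrum M y a /\ proj_first a = b.
Proof.
move=> fgR noeth b.
have [s hs] : fg_submodule (fun _ : M => True).
  by apply: noeth; split.
have gen : forall x : M, exists a : 'I_(size s) -> R, x = \sum_i a i *: s`_i.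
  by move=> x; apply/(hs x).
set z' := shift_tuple (drop_last y) b.
split; last first.
  move=> [a [na pa]] ex'; apply: na.
  apply: (char_exact gen) => x.
  have [m' hm] := zM_of_exact ex' x.
  exists (ext_last m' 0); rewrite big_ord_recr /= ext_last_max scaler0 addr0 hm.
  apply: eq_bigr => i _; rewrite ext_last_widen /z' -pa.
  by [].
move=> na; apply: NNPP => hno.
have exc : forall c : k, koszul_exact M (shift_tuple y (ext_last b c)).
  move=> c; apply: NNPP => nex; apply: hno; exists (ext_last b c); split => //.
  by apply: functional_extensionality => i; rewrite /proj_first ext_last_widen.
pose L := fun x : M => zM z' x.
have L0 : L 0 by exists (fun _ => 0); rewrite big1 // => i _; rewrite scaler0.
have LD : forall u v, L u -> L v -> L (u + v).
  move=> u v [mu ->] [mv ->]; exists (fun i => mu i + mv i).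
  by rewrite -big_split; apply: eq_bigr => i _; rewrite scalerDr.
have LZ : forall (r : R) u, L u -> L (r *: u).
  move=> r u [mu ->]; exists (fun i => r *: mu i).
  by rewrite scaler_sumr; apply: eq_bigr => i _; rewrite !scalerA mulrC.
pose J := fun r : R => forall x : M, L (r *: x).
have J0 : J 0 by move=> x; rewrite scale0r.
have JD : forall a b, J a -> J b -> J (a + b).
  by move=> a1 b1 ha hb x; rewrite scalerDl; apply: LD.
have JM : forall r a, J a -> J (r * a).
  by move=> r a ha x; rewrite -scalerA; apply: LZ.
have J1 : ~ J 1.
  move=> h; apply: na; apply: (char_exact gen) => x.
  by have := h x; rewrite scale1r.
have [c hc] := nullst (y ord_max) fgR J0 JD JM J1.
pose Ic := fun r : R => exists t, r = (y ord_max - c%:A) * t.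
have I0 : Ic 0 by exists 0; rewrite mulr0.
have ID : forall a b, Ic a -> Ic b -> Ic (a + b).
  by move=> a1 b1 [t1 ->] [t2 ->]; exists (t1 + t2); rewrite mulrDr.
have IM : forall r a, Ic a -> Ic (r * a).
  by move=> r a [t ->]; exists (r * t); rewrite mulrCA.
have hx : forall x : M, exists N (a : 'I_N -> R) (mm : 'I_N -> M),
    (forall i, Ic (a i)) /\ L (x - \sum_i a i *: mm i).
  move=> x; have [mx hmx] := zM_of_exact (exc c) x.
  exists 1%N, (fun _ => y ord_max - c%:A), (fun _ => mx ord_max); split.
    by move=> _; exists 1; rewrite mulr1.
  rewrite big_ord1 hmx big_ord_recr /= /shift_tuple ext_last_max addrK.
  exists (fun i => mx (widen_ord (leqnSn m) i)); apply: eq_bigr => i _.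
  by rewrite ext_last_widen.
have [r [[t ht] hr]] := @nakayama R M Ic L I0 ID IM L0 LD LZ s gen hx.
apply: (hc t); rewrite -ht addrC subrK.
exact: hr.
Qed.
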